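(* Under the assumptions on $\Psi$ stated in the context, let $T\in(0,\infty]$, let $g^{in}\in L^1_{-2\beta,1}(0,\infty)$ be non-negative, and let $g$ be a weak solution on $[0,T)$. Then for every $q\in(0,\infty)$ and $t\in(0,T)$, $\int_0^q\zeta g(\zeta,t)d\zeta-\int_0^q\zeta g^{in}(\zeta)d\zeta=-\int_0^t\int_0^q\int_{q-\zeta}^\infty\zeta\Psi(\zeta,\eta)g(\zeta,s)g(\eta,s)\,d\eta\, d\zeta\, ds.$
   Context: $\Psi:(0,\infty)^2\to[0,\infty)$ is measurable and symmetric and there are $\beta>0$, $k>0$ with $\Psi(\zeta,\eta)\le k(\zeta\eta)^{-\beta}$ on $(0,1)^2$, $\Psi(\zeta,\eta)\le k\eta\zeta^{-\beta}$ on $(0,1)\times(1,\infty)$, and $\Psi(\zeta,\eta)\le k(\zeta+\eta)$ on $(1,\infty)^2$. $L^1_{-2\beta,1}(0,\infty):=L^1((0,\infty);(\zeta^{-2\beta}+\zeta)d\zeta)$. A weak solution on $[0,T)$ is a non-negative $g\in\mathcal{C}([0,T);L^1(0,\infty))\cap L^\infty(0,T;L^1_{-2\beta,1}(0,\infty))$ such that for every $t\in(0,T)$ and $\omega\in L^\infty(0,\infty)$, $\int_0^\infty[g(\zeta,t)-g^{in}(\zeta)]\omega(\zeta)d\zeta=\frac12\int_0^t\int_0^\infty\int_0^\infty[\omega(\zeta+\eta)-\omega(\zeta)-\omega(\eta)]\Psi(\zeta,\eta)g(\zeta,s)g(\eta,s)d\eta d\zeta ds$. *)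

(* Defs.v *)
From HB Require Import structures.
From mathcomp Require Import all_boot all_order all_algebra.
From mathcomp Require Import all_classical all_reals all_analysis.
Set Implicit Arguments. Unset Strict Implicit. Unset Printing Implicit Defensive.
Import Order.TTheory GRing.Theory Num.Theory.
Import numFieldNormedType.Exports.
Local Open Scope classical_set_scope.
Local Open Scope ring_scope.

Section Defs.
Variable R : realType.
Local Notation leb := (@lebesgue_measure R).

Definition Ipos : set R := [set x | 0 < x].
Definition Itime0 (T : \bar R) : set R := [set t | 0 <= t /\ (t%:E < T)%E].
Definition Itime (T : \bar R) : set R := [set t | 0 < t /\ (t%:E < T)%E].

Definition kernel_assumptions (beta k : R) (Psi : R -> R -> R) : Prop :=
  0 < beta /\ 0 < k /\
  measurable_fun (Ipos `*` Ipos) (fun p : R * R => Psi p.1 p.2) /\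
  (forall z e, 0 < z -> 0 < e -> 0 <= Psi z e) /\
  (forall z e, 0 < z -> 0 < e -> Psi z e = Psi e z) /\
  (forall z e, 0 < z < 1 -> 0 < e < 1 -> Psi z e <= k * (z * e) `^ (- beta)) /\
  (forall z e, 0 < z < 1 -> 1 < e -> Psi z e <= k * e * z `^ (- beta)) /\
  (forall z e, 1 < z -> 1 < e -> Psi z e <= k * (z + e)).

Definition wgt (beta z : R) : R := z `^ (- (2 * beta)) + z.

Definition in_L1w (beta : R) (f : R -> R) : Prop :=
  measurable_fun Ipos f /\
  (\int[leb]_(z in Ipos) (wgt beta z * `|f z|)%:E < +oo)%E.

Definition in_Linfty (w : R -> R) : Prop :=
  measurable_fun Ipos w /\
  exists M : R, {ae leb, forall z, Ipos z -> `|w z| <= M}.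

Definition weak_solution (beta : R) (Psi : R -> R -> R) (T : \bar R)
    (gin : R -> R) (g : R -> R -> R) : Prop :=
      (forall z t, 0 < z -> Itime0 T t -> 0 <= g z t) /\
      measurable_fun (Ipos `*` Itime0 T) (fun p : R * R => g p.1 p.2) /\
      (* g in C([0,T); L^1(0,oo)) *)
      (forall t, Itime0 T t -> leb.-integrable Ipos (fun z => (g z t)%:E)) /\
      (forall t0, Itime0 T t0 -> forall eps : R, 0 < eps ->
         exists2 d : R, 0 < d & forall t, Itime0 T t -> `|t - t0| < d ->
           (\int[leb]_(z in Ipos) (`|g z t - g z t0|)%:E < eps%:E)%E) /\
      (* g in L^oo(0,T; L^1_{-2beta,1}(0,oo)) *)
      (exists C : R, {ae leb, forall t, Itime T t ->
         (\int[leb]_(z in Ipos) (wgt beta z * `|g z t|)%:E <= C%:E)%E}) /\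
      (forall t, Itime T t -> forall w : R -> R, in_Linfty w ->
         (\int[leb]_(z in Ipos) ((g z t - gin z) * w z)%:E =
          (2^-1 : R)%:E *
          \int[leb]_(s in [set x | (0 < x < t)%R])
            \int[leb]_(z in Ipos) \int[leb]_(e in Ipos)
              ((w (z + e) - w z - w e) * Psi z e * g z s * g e s)%:E)%E).

End Defs.

(* Main.v *)
Require Import Defs.
From HB Require Import structures.
From mathcomp Require Import all_boot all_order all_algebra.
From mathcomp Require Import all_classical all_reals all_analysis.
From mathcomp Require Import ring lra.
From mathcomp Require Import measurable_realfun.
Import Order.TTheory GRing.Theory Num.Theory.
Import numFieldNormedType.Exports.
Local Open Scope classical_set_scope.
Local Open Scope ring_scope.

Section scal.
Local Open Scope ereal_scope.
Context d (T : measurableType d) (R : realType) (mu : {measure set T -> \bar R}).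
Import HBNNSimple.

Lemma ge0_integralZl_nm (D : set T) (f : T -> \bar R) (k : R) : (0 < k)%R ->
  (forall x, D x -> 0 <= f x) ->
  \int[mu]_(x in D) (k%:E * f x) = k%:E * \int[mu]_(x in D) f x.
Proof.
move=> k0 f0.
have kf0 : forall x, D x -> 0 <= k%:E * f x.
  by move=> x Dx; apply: mule_ge0; [rewrite lee_fin ltW|apply: f0].
have p0 : (point : \bar R) = 0 by [].
rewrite (ge0_integralE _ kf0) (ge0_integralE _ f0) -ereal_supZl ?(ltW k0)//; last first.
  apply/set0P; exists (sintegral mu (@nnsfun0 _ T R)); exists nnsfun0 => // x /=.
  by rewrite /patch; case: ifP => // /set_mem Dx; rewrite f0.
congr ereal_sup; apply/seteqP; split.
- move=> _ /= [h hf <-].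
  have ki : (0 <= k^-1)%R by rewrite invr_ge0 ltW.
  exists (sintegral mu (scale_nnsfun h ki)); last first.
    by rewrite [sintegral _ _]sintegralrM muleA -EFinM mulfV ?gt_eqF// mul1e.
  exists (scale_nnsfun h ki) => // x /=.
  move: (hf x); rewrite /patch; case: ifP => Dx hx.
    rewrite EFinM -(@lee_pmul2l _ k%:E) ?lte_fin// muleA -EFinM mulfV ?gt_eqF//.
    by rewrite mul1r.
  rewrite p0 in hx *; have hx0 : (h x = 0)%R.
    by apply/eqP; rewrite eq_le -lee_fin hx /= fun_ge0.
  by rewrite hx0 mulr0.
- move=> _ /= [_ [h hf <-] <-].
  exists (scale_nnsfun h (ltW k0)); last by rewrite [sintegral _ _]sintegralrM.
  move=> x /=; move: (hf x); rewrite /patch; case: ifP => Dx hx.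
    by rewrite EFinM lee_pmul2l ?lte_fin.
  rewrite p0 in hx *; have hx0 : (h x = 0)%R.
    by apply/eqP; rewrite eq_le -lee_fin hx /= fun_ge0.
  by rewrite hx0 mulr0.
Qed.
End scal.

Section gen.
Local Open Scope ereal_scope.
Context d (T : measurableType d) (R : realType) (mu : {measure set T -> \bar R}).
Import HBNNSimple.

Lemma int_restr (D1 D2 : set T) (f1 f2 : T -> \bar R) :
  (forall x, D1 x -> D2 x -> f1 x = f2 x) ->
  (forall x, D1 x -> ~ D2 x -> f1 x = 0) ->
  (forall x, ~ D1 x -> D2 x -> f2 x = 0) ->
  \int[mu]_(x in D1) f1 x = \int[mu]_(x in D2) f2 x.
Proof.
move=> H1 H2 H3; rewrite (integral_mkcond D1) (integral_mkcond D2).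
apply: eq_integral => x _.
rewrite /patch; case: ifPn => [/set_mem|/negP] h1; case: ifPn => [/set_mem|/negP] h2.
- exact: H1.
- by apply: H2 => // h; apply h2; exact: mem_set.
- by symmetry; apply: H3 => // h; apply h1; exact: mem_set.
- by [].
Qed.

Lemma le_integral_nm (D : set T) (f1 f2 : T -> \bar R) :
  (forall x, D x -> 0 <= f1 x) -> (forall x, D x -> f1 x <= f2 x) ->
  \int[mu]_(x in D) f1 x <= \int[mu]_(x in D) f2 x.
Proof.
move=> f10 f12.
have f20 : forall x, D x -> 0 <= f2 x.
  by move=> x Dx; apply: le_trans (f10 x Dx) (f12 x Dx).
rewrite (ge0_integralE _ f10) (ge0_integralE _ f20).
apply: ereal_sup_le => _ [h hf <-]; exists h => // x.
apply: le_trans (hf x) _; rewrite /patch; case: ifP => // /set_mem Dx.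
exact: f12.
Qed.

Lemma integrable_bound (D : set T) (f : T -> R) (h : T -> \bar R) :
  measurable_fun D f -> (forall x, D x -> `|f x|%:E <= h x) ->
  \int[mu]_(x in D) h x < +oo -> mu.-integrable D (EFin \o f).
Proof.
move=> mf fh hoo; apply/integrableP; split; first exact/measurable_realfun.measurable_EFinP.
apply: le_lt_trans hoo; apply: le_integral_nm => x Dx //=; exact: fh.
Qed.
End gen.

Definition Wq {R : realType} (q : R) (z : R) : R := if z < q then z else 0.

Lemma W_key (R : realType) (q z e : R) : 0 < z -> 0 < e ->
 Wq q (z+e) - Wq q z - Wq q e = - ((if (z < q) && (q <= z+e) then z else 0) + (if (e < q) && (q <= e + z) then e else 0)).
Proof.
move=> z0 e0; rewrite /Wq (addrC e z).
case: (ltP z q) => zq; case: (ltP e q) => eq; case: (ltP (z+e) q) => zeq /=; lra.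
Qed.

Lemma inner_eq (R : realType) (Psi : R -> R -> R) (G : R -> R) (q : R) :
  0 < q -> measurable_fun (@Ipos R `*` @Ipos R) (fun p : R * R => Psi p.1 p.2) ->
  (forall z e, 0 < z -> 0 < e -> 0 <= Psi z e) ->
  (forall z e, 0 < z -> 0 < e -> Psi z e = Psi e z) ->
  measurable_fun (@Ipos R) G -> (forall z, 0 < z -> 0 <= G z) ->
  (\int[@lebesgue_measure R]_(z in @Ipos R) \int[@lebesgue_measure R]_(e in @Ipos R)
     ((Wq q (z + e) - Wq q z - Wq q e) * Psi z e * G z * G e)%:E =
   - (2%:E * \int[@lebesgue_measure R]_(z in [set x | (0 < x < q)%R])
         \int[@lebesgue_measure R]_(e in [set x | (q - z < x)%R])
           (z * Psi z e * G z * G e)%:E))%E.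
Proof.
move=> q0 mPsi Psi0 Psisym mG G0.
have mIpos : measurable (@Ipos R) by rewrite /Ipos -set_itvoy; exact: measurable_itv.
pose Pr : R * R -> R := (fun p : R * R => Psi p.1 p.2) \_ (@Ipos R `*` @Ipos R).
pose Gr : R -> R := G \_ (@Ipos R).
pose cnd (z e : R) : bool := [&& 0 < z, 0 < e, z < q & q <= z + e].
pose a (z e : R) : R := if cnd z e then z * Pr (z, e) * Gr z * Gr e else 0.
have PrE : forall z e, 0 < z -> 0 < e -> Pr (z, e) = Psi z e.
  by move=> z e z0 e0; rewrite /Pr /patch ifT //; apply: mem_set.
have GrE : forall z, 0 < z -> Gr z = G z.
  by move=> z z0; rewrite /Gr /patch ifT //; apply: mem_set.
have aE : forall z e, 0 < z -> 0 < e ->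
    a z e = (if (z < q) && (q <= z + e) then z else 0) * Psi z e * G z * G e.
  move=> z e z0 e0; rewrite /a /cnd z0 e0 /=.
  by case: ifP => _; rewrite ?PrE ?GrE// !mul0r.
have az0 : forall z e, ~ (0 < z) -> a z e = 0.
  by move=> z e nz; rewrite /a /cnd ifF //; apply/negP => /and4P[]. 
have ae0 : forall z e, ~ (0 < e) -> a z e = 0.
  by move=> z e nz; rewrite /a /cnd ifF //; apply/negP => /and4P[]. 
have a0 : forall z e, 0 <= a z e.
  move=> z e; rewrite /a; case: ifP => // /and4P[z0 e0 _ _].
  rewrite PrE ?GrE //.
  apply: mulr_ge0; [apply: mulr_ge0; [apply: mulr_ge0; [exact: ltW|exact: Psi0]|exact: G0]|exact: G0].
have key : forall z e, 0 < z -> 0 < e ->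
    ((Wq q (z + e) - Wq q z - Wq q e) * Psi z e * G z * G e)%:E =
    (- ((a z e)%:E + (a e z)%:E))%E.
  move=> z e z0 e0; rewrite (aE z e) // (aE e z) // W_key // (Psisym e z) //.
  rewrite -EFinD -EFinN; congr EFin.
  move: (if _ then z else 0) (if _ then e else 0) => A B; ring.
have mPr : measurable_fun setT Pr.
  by apply/(measurable_restrictT _ _).1 => //; exact: measurableX.
have mGr : measurable_fun setT Gr by apply/(measurable_restrictT _ _).1.
have ma : measurable_fun [set: R * R] (fun p : R * R => ((a p.1 p.2)%:E : \bar R)).
  have -> : (fun p : R * R => (a p.1 p.2)%:E) = EFin \o
      (fun p : R * R => if cnd p.1 p.2 then p.1 * Pr p * Gr p.1 * Gr p.2 else 0).
    by apply/funext => -[z e].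
  apply/measurable_realfun.measurable_EFinP; apply: measurable_fun_ifT.
  - rewrite /cnd; apply: measurable_and; [|apply: measurable_and; [|apply: measurable_and]].
    + apply: measurable_realfun.measurable_fun_ltr; [exact: measurable_cst|exact: measurable_fst].
    + apply: measurable_realfun.measurable_fun_ltr; [exact: measurable_cst|exact: measurable_snd].
    + apply: measurable_realfun.measurable_fun_ltr; [exact: measurable_fst|exact: measurable_cst].
    + apply: measurable_realfun.measurable_fun_ler; first exact: measurable_cst.
      apply: measurable_realfun.measurable_funD; [exact: measurable_fst|exact: measurable_snd].
  - apply: measurable_realfun.measurable_funM; last exact: measurableT_comp mGr measurable_snd.
    apply: measurable_realfun.measurable_funM; last exact: measurableT_comp mGr measurable_fst.
    apply: measurable_realfun.measurable_funM; [exact: measurable_fst|exact: mPr].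
  - exact: measurable_cst.
have mb : measurable_fun [set: R * R] (fun p : R * R => ((a p.2 p.1)%:E : \bar R)).
  have -> : (fun p : R * R => ((a p.2 p.1)%:E : \bar R)) = (fun p : R * R => ((a p.1 p.2)%:E : \bar R)) \o (@unstable.swap R R) by [].
  apply: measurableT_comp; [exact: ma|exact: measurable_swap].
have ab0 : forall z e, (0 <= (a z e)%:E + (a e z)%:E)%E.
  by move=> z e; apply: adde_ge0; rewrite lee_fin.
transitivity (- \int[@lebesgue_measure R]_(z in @Ipos R)
    \int[@lebesgue_measure R]_(e in @Ipos R) ((a z e)%:E + (a e z)%:E))%E.
  transitivity (\int[@lebesgue_measure R]_(z in @Ipos R)
    - \int[@lebesgue_measure R]_(e in @Ipos R) ((a z e)%:E + (a e z)%:E))%E.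
    apply: eq_integral => z /set_mem z0.
    transitivity (\int[@lebesgue_measure R]_(e in @Ipos R) - ((a z e)%:E + (a e z)%:E))%E.
      by apply: eq_integral => e /set_mem e0; exact: key.
    by apply: integral_ge0N => e _.
  by apply: integral_ge0N => z _; apply: integral_ge0 => e _.
congr (- _)%E.
transitivity (\int[@lebesgue_measure R]_z
    \int[@lebesgue_measure R]_e ((a z e)%:E + (a e z)%:E))%E.
  apply: int_restr => z.
  - move=> z0 _; apply: int_restr => e.
    + by [].
    + by move=> _ /(_ I).
    + by move=> ne0 _; rewrite (ae0 z e ne0) (az0 e z ne0) adde0.
  - by move=> _ /(_ I).
  - by move=> nz0 _; apply: integral0_eq => e _; rewrite (az0 z e nz0) (ae0 e z nz0) adde0.
have mab : measurable_fun [set: R * R]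
    (fun p : R * R => ((a p.1 p.2)%:E + (a p.2 p.1)%:E : \bar R)%E).
  exact: emeasurable_funD.
pose L := @lebesgue_measure R.
have h1 := (@fubini_tonelli1 _ _ _ _ R L L _ mab (fun p => ab0 p.1 p.2)).
have h2 := (@fubini_tonelli1 _ _ _ _ R L L _ ma (fun p => (a0 p.1 p.2 : (0 <= (a p.1 p.2)%:E)%E))).
have h3 := (@fubini_tonelli1 _ _ _ _ R L L _ mb (fun p => (a0 p.2 p.1 : (0 <= (a p.2 p.1)%:E)%E))).
have h4 := (@fubini_tonelli _ _ _ _ R L L _ mb (fun p => (a0 p.2 p.1 : (0 <= (a p.2 p.1)%:E)%E))).
rewrite /fubini_F in h1 h2 h3.
rewrite /L -h1.
rewrite ge0_integralD //; last 2 first.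
  by move=> p _; rewrite lee_fin.
  by move=> p _; rewrite lee_fin.
rewrite h2 h3 h4.
rewrite -mule2n -mule_natl; congr (_ * _)%E.
apply: int_restr => z; last by move=> /(_ I).
- move=> _ /andP[z0 zq].
  have qz0 : 0 < q - z by rewrite subr_gt0.
  transitivity (\int[@lebesgue_measure R]_(e in [set x | (q - z <= x)%R])
      (z * Psi z e * G z * G e)%:E)%E.
    apply: int_restr => e; last by move=> /(_ I).
    + move=> _ /= ze.
      have e0 : 0 < e by apply: lt_le_trans ze.
      rewrite aE // ifT //; apply/andP; split => //; lra.
    + move=> _ /= nze; rewrite /a ifF //; apply/negP => /and4P[_ _ _ h].
      by apply: nze; lra.
  rewrite -set_itvcy -integral_itv_obnd_cbnd ?set_itvoy //.
  apply/measurable_EFinP.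
  have sub : [set e | q - z < e] `<=` @Ipos R.
    by move=> e /= ze; rewrite /Ipos /=; apply: lt_trans ze.
  apply: measurable_funM; last exact: measurable_funS mIpos sub mG.
  apply: (@measurable_funM _ _ _ _ (fun x => z * Psi z x) (fun _ => G z)).
    apply: (@measurable_funM _ _ _ _ (fun _ => z) (fun x => Psi z x)).
      exact: measurable_cst.
    apply: (measurable_comp (F := @Ipos R `*` @Ipos R) (f := fun p : R * R => Psi p.1 p.2)
       (g := fun e : R => (z, e))) => //.
    + exact: measurableX.
    + by move=> _ [e /sub e0 <-]; split.
    + apply: measurable_funS (measurable_fun_pair _ _) => //.
        exact: measurable_cst.
- move=> _ nD; apply: integral0_eq => e _; rewrite /a ifF //.
  by apply/negP => /and4P[z0 _ zq _]; apply: nD; rewrite /= z0 zq.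
Qed.

Theorem lemma3p1 (R : realType) (beta k : R) (Psi : R -> R -> R)
    (T : \bar R) (gin : R -> R) (g : R -> R -> R) :
  kernel_assumptions beta k Psi ->
  (0 < T)%E ->
  (forall z, 0 < z -> 0 <= gin z) ->
  in_L1w beta gin ->
  weak_solution beta Psi T gin g ->
  forall q t : R, 0 < q -> Itime T t ->
  (\int[@lebesgue_measure R]_(z in [set x | (0 < x < q)%R]) (z * g z t)%:E
   - \int[@lebesgue_measure R]_(z in [set x | (0 < x < q)%R]) (z * gin z)%:E =
   - \int[@lebesgue_measure R]_(s in [set x | (0 < x < t)%R])
       \int[@lebesgue_measure R]_(z in [set x | (0 < x < q)%R])
         \int[@lebesgue_measure R]_(e in [set x | (q - z < x)%R])
           (z * Psi z e * g z s * g e s)%:E)%E.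
Proof.
move=> [b0 [k0 [mPsi [Psi0 [Psisym _]]]]] T0 gin0 [mgin gin_int]
  [g0 [mg [gint [_ [_ weak]]]]] q t q0 tT.
have mIpos : measurable (@Ipos R) by rewrite /Ipos -set_itvoy; exact: measurable_itv.
have mW : measurable_fun setT (Wq q).
  apply: measurable_fun_ifT => //.
    exact: measurable_realfun.measurable_fun_ltr.
have WL : in_Linfty (Wq q).
  split; first exact: measurable_funS mW.
  exists q; apply: aeW => z z0; rewrite /Wq; case: ifP => zq.
    by rewrite gtr0_norm// ltW.
  by rewrite normr0 ltW.
have E := weak t tT (Wq q) WL.
have HL : (\int[@lebesgue_measure R]_(z in @Ipos R) ((g z t - gin z) * Wq q z)%:E =
  \int[@lebesgue_measure R]_(z in [set x | (0 < x < q)%R]) (z * g z t)%:E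
   - \int[@lebesgue_measure R]_(z in [set x | (0 < x < q)%R]) (z * gin z)%:E)%E.
  have tT0 : Itime0 T t by split; [exact: ltW tT.1|exact: tT.2].
  have /integrableP[mgtE gtoo] := gint t tT0.
  have mgt : measurable_fun (@Ipos R) (fun z => g z t).
    exact/measurable_realfun.measurable_EFinP.
  have mWI : measurable_fun (@Ipos R) (Wq q) by exact: measurable_funS mW.
  have Wle : forall z, 0 < z -> `|Wq q z| <= z.
    move=> z z0; rewrite /Wq; case: ifP => _; first by rewrite gtr0_norm.
    by rewrite normr0 ltW.
  have Wleq : forall z, 0 < z -> `|Wq q z| <= q.
    move=> z z0; rewrite /Wq; case: ifP => zq.
      by rewrite gtr0_norm// ltW.
    by rewrite normr0 ltW.
  have i1 : (@lebesgue_measure R).-integrable (@Ipos R)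
      (EFin \o (fun z => g z t * Wq q z)).
    apply: (@integrable_bound _ _ R (@lebesgue_measure R) (@Ipos R) (fun z => g z t * Wq q z) (fun z => q%:E * `|(g z t)%:E|)%E).
    - exact: measurable_realfun.measurable_funM.
    - move=> z z0; rewrite -EFinM lee_fin normrM mulrC.
      by apply: ler_wpM2r => //; exact: Wleq.
    - rewrite ge0_integralZl_nm //; apply: lte_mul_pinfty => //.
      by rewrite lee_fin ltW.
  have i2 : (@lebesgue_measure R).-integrable (@Ipos R)
      (EFin \o (fun z => gin z * Wq q z)).
    apply: (@integrable_bound _ _ R (@lebesgue_measure R) (@Ipos R) (fun z => gin z * Wq q z) (fun z => (wgt beta z * `|gin z|)%:E)).
    - exact: measurable_realfun.measurable_funM.
    - move=> z z0; rewrite lee_fin normrM mulrC.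
      apply: ler_wpM2r => //; apply: le_trans (Wle z z0) _.
      by rewrite /wgt lerDr powR_ge0.
    - exact: gin_int.
  under eq_integral => z _ do rewrite mulrBl EFinB.
  rewrite integralB_EFin //; congr (_ - _)%E.
  - apply: int_restr => z /=.
    + by move=> z0 /andP[_ zq]; rewrite /Wq zq mulrC.
    + by move=> z0 nzq; rewrite /Wq ifF ?mulr0//; apply/negP => zq; apply: nzq; rewrite z0.
    + by move=> nz0 /andP[z0 _].
  - apply: int_restr => z /=.
    + by move=> z0 /andP[_ zq]; rewrite /Wq zq mulrC.
    + by move=> z0 nzq; rewrite /Wq ifF ?mulr0//; apply/negP => zq; apply: nzq; rewrite z0.
    + by move=> nz0 /andP[z0 _].
have HR : {in [set x | (0 < x < t)%R], forall s,
   (\int[@lebesgue_measure R]_(z in @Ipos R) \int[@lebesgue_measure R]_(e in @Ipos R)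
     ((Wq q (z + e) - Wq q z - Wq q e) * Psi z e * g z s * g e s)%:E =
   - (2%:E * \int[@lebesgue_measure R]_(z in [set x | (0 < x < q)%R])
         \int[@lebesgue_measure R]_(e in [set x | (q - z < x)%R])
           (z * Psi z e * g z s * g e s)%:E))%E}.
  move=> s /set_mem /= /andP[s0 st].
  have sT : Itime0 T s.
    split; first exact: ltW.
    by apply: lt_trans tT.2; rewrite lte_fin.
  apply: (@inner_eq R Psi (fun z => g z s) q q0 mPsi Psi0 Psisym).
    by have /integrableP[/measurable_realfun.measurable_EFinP] := gint s sT.
  by move=> z z0; apply: g0.
rewrite -HL E. under eq_integral => s Hs do rewrite (HR s Hs).
have Y0 : forall s, [set x | (0 < x < t)%R] s ->
   (0 <= \int[@lebesgue_measure R]_(z in [set x | (0 < x < q)%R])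
         \int[@lebesgue_measure R]_(e in [set x | (q - z < x)%R])
           (z * Psi z e * g z s * g e s)%:E)%E.
  move=> s /= /andP[s0 st].
  have sT : Itime0 T s.
    split; first exact: ltW.
    by apply: lt_trans tT.2; rewrite lte_fin.
  apply: integral_ge0 => z /= /andP[z0 zq].
  apply: integral_ge0 => e /= ze; rewrite lee_fin.
  have e0 : 0 < e by apply: le_lt_trans ze; rewrite subr_ge0 ltW.
  apply: mulr_ge0; [apply: mulr_ge0; [apply: mulr_ge0; [exact: ltW|exact: Psi0]|exact: g0]|exact: g0].
rewrite integral_ge0N; last first.
  by move=> s Hs; apply: mule_ge0 => //; exact: Y0.
rewrite ge0_integralZl_nm //.
by rewrite muleN muleA -EFinM mulVf ?pnatr_eq0// mul1e.
Qed.
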